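(* Consider the periodic robust learning MPC scheme described in the context, and assume the stage costs $l_t(z,v)$ are continuous, convex and satisfy $l_t(z,v)\ge 0$. Then at every iteration $j\ge1$ and every $t\in\{0,1,\dots,T-N\}$, the closed-loop cumulative cost $J^j(z_t^j)=\sum_{k=t}^T l_k(z_k^j,v_k^j)$ satisfies $J^j(z_t^j)\le J_{t|t'}^{i,j}(z_{t|t'}^{i,j})$ for every shifted state $z_{t|t'}^{i,j}\in\mathbb{SS}_t^j$ with $z_{t|t'}^{i,j}=z_t^j$. In particular, if $\theta^j\in\mathbb{W}_0^i$ for some $i\in\{0,\dots,j-1\}$, then $J^j(z_0^j)\le J_{0|0}^{i,j}(z_0^j)$.
   Context: Let $T\in\mathbb{N}$ be the period/task length and $N\le T$ the prediction horizon; $\mathbb{N}_a^b=\{a,a+1,\dots,b\}$. For $t\in\mathbb{N}_0^T$ let $A_t\in\mathbb{R}^{n\times n}$, $B_t\in\mathbb{R}^{n\times m}$, $C_t\in\mathbb{R}^{n\times d}$ be given, together with tightened constraint data $\bar F_t,\bar G_t,\bar f_t$ (polytopic constraints $\bar F_t z+\bar G_t v\le \bar f_t$), gains $K_t$ and $\Phi_t=A_t+B_tK_t$. Let $(\theta,t)\mapsto w_{\theta,t}\in\mathbb{R}^d$ be a given (known) parametrized disturbance profile, with parameters $\theta$ ranging in a set $\mathbb{W}_\theta$. Each iteration $j=0,1,2,\dots$ has a parameter $\theta^j\in\mathbb{W}_\theta$, known at iteration $j$, and nominal dynamics $z_{k+1}=A_kz_k+B_kv_k+C_kw_{\theta^j,k}$,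 all iterations starting from $z_0^j=x_s$. Standing assumption: a closed-loop trajectory $\{\mathbf{z}^0,\mathbf{v}^0\}$ of iteration $0$ (parameter $\theta^0$) is given satisfying the nominal dynamics and tightened constraints, and $\mathbb{W}_t^0\supseteq\mathbb{W}_\theta$ for all $t$; at each solved LMPC problem an optimal solution is selected. Shifting: for a past iteration $i$ with recorded closed-loop states $\mathbf{z}^i=[z_0^i,\dots,z_T^i]$, inputs $\mathbf{v}^i=[v_0^i,\dots,v_T^i]$ and parameter $\theta^i$, a parameter $\theta$ and a start time $t$, define $e_{t|t}=0$, $e_{k+1|t}=\Phi_k e_{k|t}+C_k(w_{\theta,k}-w_{\theta^i,k})$, $v_{k|t}=v_k^i+K_ke_{k|t}$, $z_{k|t}=z_k^i+e_{k|t}$ for $k\in\mathbb{N}_t^T$; when $\theta=\theta^j$ these are denoted $z_{k|t}^{i,j},v_{k|t}^{i,j}$. The feasible disturbance set $\mathbb{W}_t^i$ is the set of $\theta$ for which the resulting shifted pairs satisfy $\bar F_k z_{k|t}+\bar G_k v_{k|t}\le \bar f_k$ for all $k\in\mathbb{N}_t^T$. Safe sets and cost-to-go at iteration $j$: $\mathbb{SS}_k^j=\{z_{k|t}^{i,j}: i\in\mathbb{N}_0^{j-1},\ t\in\mathbb{N}_0^k,\ \theta^j\in\mathbb{W}_t^i\}$ (a finite set of points), shifted costs $J_{k|t}^{i,j}(z_{k|t}^{i,j})=\sum_{r=k}^T l_r(z_{r|t}^{i,j},v_{r|t}^{i,j})$, and $Q_k^j(z)=\min\{J_{k|t}^{i,j}: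 i\in\mathbb{N}_0^{j-1}, t\in\mathbb{N}_0^k, \theta^j\in\mathbb{W}_t^i, z_{k|t}^{i,j}=z\}$ if $z\in\mathbb{SS}_k^j$, and $Q_k^j(z)=+\infty$ otherwise. LMPC problem at time $t\in\mathbb{N}_0^{T-N}$ of iteration $j$, given current nominal state $z_t^j$: minimize $\sum_{k=t}^{t+N-1}l_k(z_{k|t},v_{k|t})+Q_{t+N}^j(z_{t+N|t})$ over $v_{t|t},\dots,v_{t+N-1|t}$ subject to $z_{t|t}=z_t^j$, $z_{k+1|t}=A_kz_{k|t}+B_kv_{k|t}+C_kw_{\theta^j,k}$, $\bar F_kz_{k|t}+\bar G_kv_{k|t}\le\bar f_k$ for $k\in\mathbb{N}_t^{t+N-1}$, and $z_{t+N|t}\in\mathbb{SS}_{t+N}^j$. With optimal inputs $v^{j,*}_{k|t}$, the closed-loop input is $v_t^j=v_{t|t}^{j,*}$ if $t+N\le T$ and $v_t^j=v_{t|T-N}^{j,*}$ if $t+N>T$, and $z_{t+1}^j=A_tz_t^j+B_tv_t^j+C_tw_{\theta^j,t}$. The closed-loop $\{\mathbf{z}^j,\mathbf{v}^j\}$ together with $\theta^j$ is recorded and used as historical data for later iterations. *)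

(* Defs.v *)
From HB Require Import structures.
From mathcomp Require Import all_boot all_order all_algebra.
From mathcomp Require Import all_classical all_reals all_analysis.
Set Implicit Arguments. Unset Strict Implicit. Unset Printing Implicit Defensive.
Import Order.TTheory GRing.Theory Num.Theory.
Import numFieldNormedType.Exports.
Local Open Scope classical_set_scope.
Local Open Scope ring_scope.

Record lmpc_data (R : realType) (n m d : nat) (Theta : Type) := LmpcData {
  T_ : nat;
  N_ : nat;                                  (* prediction horizon *)
  A_ : nat -> 'M[R]_n;
  B_ : nat -> 'M[R]_(n, m);
  C_ : nat -> 'M[R]_(n, d);
  K_ : nat -> 'M[R]_(m, n);
  q_ : nat -> nat;
  Fb_ : forall t, 'M[R]_(q_ t, n);
  Gb_ : forall t, 'M[R]_(q_ t, m);
  fb_ : forall t, 'cV[R]_(q_ t);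
  w_ : Theta -> nat -> 'cV[R]_d
}.

Section LMPC.
Variables (R : realType) (n m d : nat) (Theta : Type).
Variable S : lmpc_data R n m d Theta.
(* recorded closed-loop data: zc j k, vc j k = state/input at time k of iteration j;
   theta j = parameter of iteration j *)
Variables (zc : nat -> nat -> 'cV[R]_n) (vc : nat -> nat -> 'cV[R]_m)
          (theta : nat -> Theta).
Variable l : nat -> 'cV[R]_n -> 'cV[R]_m -> R.

Definition Phi (t : nat) : 'M[R]_n := A_ S t + B_ S t *m K_ S t.

Definition cons_ok (t : nat) (z : 'cV[R]_n) (v : 'cV[R]_m) : Prop :=
  forall r : 'I_(q_ S t), (Fb_ S t *m z + Gb_ S t *m v) r 0 <= fb_ S t r 0.

Definition nom_step (th : Theta) (k : nat) (z : 'cV[R]_n) (v : 'cV[R]_m) : 'cV[R]_n :=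
  A_ S k *m z + B_ S k *m v + C_ S k *m w_ S th k.

(* error of the shifting: err i th t s = e_{t+s|t} for past iteration i,
   parameter th and start time t *)
Fixpoint shift_err (i : nat) (th : Theta) (t s : nat) : 'cV[R]_n :=
  match s with
  | 0 => 0
  | s'.+1 => Phi (t + s') *m shift_err i th t s'
             + C_ S (t + s') *m (w_ S th (t + s') - w_ S (theta i) (t + s'))
  end.

(* shifted states / inputs z_{k|t}, v_{k|t} (meaningful for t <= k <= T) *)
Definition shift_z (i : nat) (th : Theta) (t k : nat) : 'cV[R]_n :=
  zc i k + shift_err i th t (k - t).
Definition shift_v (i : nat) (th : Theta) (t k : nat) : 'cV[R]_m :=
  vc i k + K_ S k *m shift_err i th t (k - t).

Definition Wset (i t : nat) : set Theta :=
  [set th | forall k, (t <= k <= T_ S)%N ->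
              cons_ok k (shift_z i th t k) (shift_v i th t k)].

Definition Jshift (i : nat) (th : Theta) (t k : nat) : R :=
  \sum_(k <= r < (T_ S).+1) l r (shift_z i th t r) (shift_v i th t r).

Definition valid_idx (j i t k : nat) : Prop :=
  [/\ (i < j)%N, (t <= k)%N & Wset i t (theta j)].

Definition SS (j k : nat) : set 'cV[R]_n :=
  [set z | exists i t, valid_idx j i t k /\ shift_z i (theta j) t k = z].

(* cost-to-go Q_k^j : minimum over a finite set, +oo if empty *)
Definition Qctg (j k : nat) (z : 'cV[R]_n) : \bar R :=
  ereal_inf [set x : \bar R | exists i t,
     [/\ valid_idx j i t k, shift_z i (theta j) t k = z &
         x = (Jshift i (theta j) t k)%:E]].

(* predicted state of the LMPC problem at time t of iteration j,
   from initial state z0 with inputs u (indexed by absolute time):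
   pred_z j t z0 u s = z_{t+s|t} *)
Fixpoint pred_z (j t : nat) (z0 : 'cV[R]_n) (u : nat -> 'cV[R]_m) (s : nat)
  : 'cV[R]_n :=
  match s with
  | 0 => z0
  | s'.+1 => nom_step (theta j) (t + s') (pred_z j t z0 u s') (u (t + s'))
  end.

Definition lmpc_feasible (j t : nat) (z0 : 'cV[R]_n) (u : nat -> 'cV[R]_m) : Prop :=
  (forall s, (s < N_ S)%N -> cons_ok (t + s) (pred_z j t z0 u s) (u (t + s))) /\
  SS j (t + N_ S) (pred_z j t z0 u (N_ S)).

Definition lmpc_cost (j t : nat) (z0 : 'cV[R]_n) (u : nat -> 'cV[R]_m) : \bar R :=
  (\sum_(s < N_ S) l (t + s) (pred_z j t z0 u s) (u (t + s)))%:E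
  + Qctg j (t + N_ S) (pred_z j t z0 u (N_ S)).

Definition lmpc_optimal (j t : nat) (z0 : 'cV[R]_n) (u : nat -> 'cV[R]_m) : Prop :=
  lmpc_feasible j t z0 u /\
  forall u', lmpc_feasible j t z0 u' -> (lmpc_cost j t z0 u <= lmpc_cost j t z0 u')%E.

Definition Jcl (j t : nat) : R :=
  \sum_(t <= k < (T_ S).+1) l k (zc j k) (vc j k).

(* The closed loop (zc, vc, theta) is generated by the periodic robust LMPC
   scheme, vstar j t being the optimal solution selected at time t of
   iteration j (inputs indexed by absolute time). *)
Definition lmpc_closed_loop (Wtheta : set Theta) (xs : 'cV[R]_n)
  (vstar : nat -> nat -> nat -> 'cV[R]_m) : Prop :=
  [/\
      (forall j, zc j 0 = xs /\ Wtheta (theta j)),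
      (forall k, (k < T_ S)%N -> zc 0 k.+1 = nom_step (theta 0) k (zc 0 k) (vc 0 k))
      /\ (forall k, (k <= T_ S)%N -> cons_ok k (zc 0 k) (vc 0 k)),
      (forall t, Wtheta `<=` Wset 0 t),
      (forall j t, (1 <= j)%N -> (t <= T_ S - N_ S)%N ->
         lmpc_optimal j t (zc j t) (vstar j t)) &
      (forall j, (1 <= j)%N ->
         [/\ (forall t, (t <= T_ S - N_ S)%N -> vc j t = vstar j t t),
             (forall t, ((T_ S - N_ S)%N < t < T_ S)%N ->
                vc j t = vstar j (T_ S - N_ S)%N t),
             (forall t, (t < T_ S)%N ->
                zc j t.+1 = nom_step (theta j) t (zc j t) (vc j t)) &
             (* the input at the final time T is the one of the shifted
                trajectory attaining the terminal cost Q_T^j(z_T^j) *)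
             exists i t', [/\ valid_idx j i t' (T_ S),
                shift_z i (theta j) t' (T_ S) = zc j (T_ S),
                Qctg j (T_ S) (zc j (T_ S)) = (Jshift i (theta j) t' (T_ S))%:E &
                vc j (T_ S) = shift_v i (theta j) t' (T_ S)]])].

End LMPC.

Definition convex_cost (R : realType) (n m : nat)
  (f : 'cV[R]_n -> 'cV[R]_m -> R) : Prop :=
  forall (a : R) z1 z2 v1 v2, 0 <= a <= 1 ->
    f (a *: z1 + (1 - a) *: z2) (a *: v1 + (1 - a) *: v2)
    <= a * f z1 v1 + (1 - a) * f z2 v2.

(* Main.v *)
Require Import Defs.
From HB Require Import structures.
From mathcomp Require Import all_boot all_order all_algebra.
From mathcomp Require Import all_classical all_reals all_analysis.
From mathcomp Require Import zify.
Import Order.TTheory GRing.Theory Num.Theory.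
Import numFieldNormedType.Exports.
Local Open Scope classical_set_scope.
Local Open Scope ring_scope.

Lemma sum_split (R : realType) (F : nat -> R) (t N T : nat) :
  (t + N <= T.+1)%N ->
  \sum_(s < N) F (t + s)%N + \sum_(t + N <= r < T.+1) F r
  = \sum_(t <= r < T.+1) F r.
Proof.
move=> h; rewrite (@big_cat_nat _ _ _ (t + N) t T.+1) ?leq_addr //=.
congr (_ + _).
have -> : \sum_(t <= r < t + N) F r = \sum_(0 + t <= r < N + t) F r
  by rewrite add0n addnC.
rewrite big_addn addnK big_mkord; apply: eq_bigr => i _; by rewrite addnC.
Qed.

Lemma natrAddE (a b : nat) : (a + b)%R = (a + b)%N.
Proof. by []. Qed.

Lemma sum_first (R : realType) (F : nat -> R) (N : nat) : (0 < N)%N ->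
  \sum_(s < N) F s = F 0%N + \sum_(0 <= s < N.-1) F s.+1.
Proof. by case: N => // N _; rewrite big_ord_recl big_mkord. Qed.

Lemma sum_last (R : realType) (F : nat -> R) (N : nat) : (0 < N)%N ->
  \sum_(s < N) F s = \sum_(0 <= s < N.-1) F s + F N.-1.
Proof. by case: N => // N _; rewrite big_ord_recr big_mkord. Qed.

Lemma ac6 (V : zmodType) (x y z w u v : V) :
  x + y + v + (z + w + (u - v)) = x + z + (y + w) + u.
Proof. by rewrite addrACA [v + _]addrC subrK addrACA. Qed.

Lemma shift_dyn (R : realType) (n m d : nat) (Theta : Type)
  (S : lmpc_data R n m d Theta)
  (zc : nat -> nat -> 'cV[R]_n) (vc : nat -> nat -> 'cV[R]_m)
  (theta : nat -> Theta) i th t' k :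
  (t' <= k)%N -> zc i k.+1 = nom_step S (theta i) k (zc i k) (vc i k) ->
  shift_z S zc theta i th t' k.+1 =
  nom_step S th k (shift_z S zc theta i th t' k) (shift_v S vc theta i th t' k).
Proof.
move=> hk hz; rewrite /shift_z /shift_v hz subSn //= subnKC // /nom_step /Phi.
by rewrite !mulmxDr !mulmxDl mulmxN !mulmxA ac6.
Qed.

Lemma pred_shift (R : realType) (n m d : nat) (Theta : Type)
  (S : lmpc_data R n m d Theta)
  (zc : nat -> nat -> 'cV[R]_n) (vc : nat -> nat -> 'cV[R]_m)
  (theta : nat -> Theta) j t i t' :
  (t' <= t)%N ->
  (forall k, (k < T_ S)%N -> zc i k.+1 = nom_step S (theta i) k (zc i k) (vc i k)) ->
  forall s, (t + s <= T_ S)%N ->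
  pred_z S theta j t (shift_z S zc theta i (theta j) t' t)
     (shift_v S vc theta i (theta j) t') s
  = shift_z S zc theta i (theta j) t' (t + s).
Proof.
move=> htt hdyn; elim=> [|s IH] hs /=; first by rewrite addn0.
rewrite IH; last by lia.
rewrite addnS; symmetry; apply: shift_dyn; [lia | apply: hdyn; lia].
Qed.

Theorem theorem2 (R : realType) (n m d : nat) (Theta : Type)
  (S : lmpc_data R n m d Theta)
  (zc : nat -> nat -> 'cV[R]_n) (vc : nat -> nat -> 'cV[R]_m)
  (theta : nat -> Theta) (l : nat -> 'cV[R]_n -> 'cV[R]_m -> R)
  (Wtheta : set Theta) (xs : 'cV[R]_n)
  (vstar : nat -> nat -> nat -> 'cV[R]_m) :
  (0 < N_ S)%N -> (N_ S <= T_ S)%N ->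
  (forall t, continuous (fun p : 'cV[R]_n * 'cV[R]_m => l t p.1 p.2)) ->
  (forall t, convex_cost (l t)) ->
  (forall t z v, 0 <= l t z v) ->
  lmpc_closed_loop S zc vc theta l Wtheta xs vstar ->
  forall j, (1 <= j)%N ->
  (forall t, (t <= T_ S - N_ S)%N ->
     forall i t', valid_idx S zc vc theta j i t' t ->
       shift_z S zc theta i (theta j) t' t = zc j t ->
       Jcl S zc vc l j t <= Jshift S zc vc theta l i (theta j) t' t)
  /\
  (forall i, (i < j)%N -> Wset S zc vc theta i 0 (theta j) ->
     Jcl S zc vc l j 0 <= Jshift S zc vc theta l i (theta j) 0 0).
Proof.
move=> N0 NT _ _ _ [Hinit [Hdyn0 Hcons0] HW0 Hopt Hcl] j j1.
have dyn : forall i k, (k < T_ S)%N ->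
    zc i k.+1 = nom_step S (theta i) k (zc i k) (vc i k).
  move=> [|i] k hk; first exact: Hdyn0.
  by have [_ _ H _] := Hcl i.+1 isT; apply: H.
have step1 : forall t i t', (t <= T_ S - N_ S)%N ->
    valid_idx S zc vc theta j i t' t ->
    shift_z S zc theta i (theta j) t' t = zc j t ->
    (lmpc_cost S zc vc theta l j t (zc j t) (vstar j t)
      <= (Jshift S zc vc theta l i (theta j) t' t)%:E)%E.
  move=> t i t' ht [hij htt hW] hz.
  have [_ opt] := Hopt j t j1 ht.
  set u := shift_v S vc theta i (theta j) t'.
  have hp : forall s, (t + s <= T_ S)%N ->
      pred_z S theta j t (zc j t) u s = shift_z S zc theta i (theta j) t' (t + s).
    by move=> s hs; rewrite -hz; apply: pred_shift => // k hk; apply: dyn.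
  have hQ : (Qctg S zc vc theta l j (t + N_ S)
               (shift_z S zc theta i (theta j) t' (t + N_ S))
             <= (Jshift S zc vc theta l i (theta j) t' (t + N_ S))%:E)%E.
    apply: ereal_inf_lbound; exists i, t'; split => //; split => //; lia.
  apply: le_trans (opt u _) _.
    split.
      move=> s hs; rewrite hp; last by lia.
      by apply: hW; apply/andP; split; lia.
    exists i, t'; split; first by split => //; lia.
    by rewrite hp //; lia.
  rewrite /lmpc_cost hp; last by lia.
  apply: le_trans (leeD (lexx _) hQ) _.
  rewrite -EFinD lee_fin /Jshift -(@sum_split _ _ t (N_ S)); last by lia.
  rewrite lerD2r le_eqVlt; apply/orP; left; apply/eqP.
  apply: eq_bigr => s _; rewrite hp //.
  have := ltn_ord s; lia.
have main : forall dd t, (t + dd = T_ S - N_ S)%N ->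
    ((Jcl S zc vc l j t)%:E
      <= lmpc_cost S zc vc theta l j t (zc j t) (vstar j t))%E.
  have [Hv1 Hv2 Hz [i0 [t0 [hv0 hs0 hq0 hvT]]]] := Hcl j j1.
  elim=> [|dd IH] t htd.
    rewrite addn0 in htd; subst t.
    have hvv : forall s : nat, (s < N_ S)%N ->
        vc j (T_ S - N_ S + s)%N = vstar j (T_ S - N_ S)%N (T_ S - N_ S + s)%N.
      move=> s hs; have [->|s0] := eqVneq s 0%N; first by rewrite addn0 Hv1.
      by rewrite Hv2 //; apply/andP; split; lia.
    have hpr : forall s, (s <= N_ S)%N -> zc j (T_ S - N_ S + s)%N =
        pred_z S theta j (T_ S - N_ S)%N (zc j (T_ S - N_ S)%N) (vstar j (T_ S - N_ S)%N) s.
      elim=> [|s IHs] hs; first by rewrite addn0.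
      rewrite /= -IHs; last by lia.
      rewrite addnS Hz; last by lia.
      by rewrite hvv.
    rewrite /lmpc_cost /Jcl -(@sum_split _ _ (T_ S - N_ S)%N (N_ S)); last by lia.
    rewrite -hpr // subnK // big_nat1 EFinD; apply: leeD.
      rewrite lee_fin le_eqVlt; apply/orP; left; apply/eqP.
      apply: eq_bigr => s _; have hs := ltn_ord s.
      rewrite -hpr; last by lia.
      by rewrite hvv.
    by rewrite hq0 /Jshift big_nat1 hs0 hvT.
  have ht : (t <= T_ S - N_ S)%N by lia.
  have IH1 := IH t.+1 ltac:(lia).
  have [[feas_c _] _] := Hopt j t j1 ht.
  set u := vstar j t.
  set B := \sum_(0 <= s < (N_ S).-1)
             l (t + s.+1)%N (pred_z S theta j t (zc j t) u s.+1) (u (t + s.+1)%N).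
  have key : forall i2 t2, valid_idx S zc vc theta j i2 t2 (t + N_ S) ->
      shift_z S zc theta i2 (theta j) t2 (t + N_ S) = pred_z S theta j t (zc j t) u (N_ S) ->
      Jcl S zc vc l j t.+1 <= B + Jshift S zc vc theta l i2 (theta j) t2 (t + N_ S).
    move=> i2 t2 [hi2 ht2 hW2] hs2.
    pose u' := fun k => if k == (t + N_ S)%N
                        then shift_v S vc theta i2 (theta j) t2 (t + N_ S) else u k.
    have u'E : forall k, k != (t + N_ S)%N -> u' k = u k.
      by move=> k hk; rewrite /u' (negbTE hk).
    have u'N : u' (t + N_ S)%N = shift_v S vc theta i2 (theta j) t2 (t + N_ S).
      by rewrite /u' eqxx.
    have hp' : forall s, (s <= (N_ S).-1)%N ->
        pred_z S theta j t.+1 (zc j t.+1) u' s = pred_z S theta j t (zc j t) u s.+1.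
      elim=> [|s IHs] hs.
        by rewrite /= !natrAddE addn0 Hz ?Hv1 //; lia.
      rewrite [LHS]/= [RHS]/= IHs; last by lia.
      by rewrite !natrAddE addSn -addnS u'E //; lia.
    have hpN : pred_z S theta j t.+1 (zc j t.+1) u' (N_ S)
               = shift_z S zc theta i2 (theta j) t2 (t + N_ S).+1.
      rewrite -{1}(prednK N0) /= hp' // prednK // natrAddE addSn -addnS prednK //.
      rewrite u'N -hs2; symmetry; apply: shift_dyn; first by lia.
      apply: dyn; lia.
    have feas' : lmpc_feasible S zc vc theta j t.+1 (zc j t.+1) u'.
      split.
        move=> s hs; case: (ltnP s (N_ S).-1) => hs'.
          rewrite hp'; last by lia.
          rewrite ?natrAddE addSn -addnS u'E; last by lia.
          by have := feas_c s.+1 ltac:(lia); rewrite ?natrAddE.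
        have -> : s = (N_ S).-1 by lia.
        rewrite hp' // prednK // ?natrAddE addSn -addnS prednK // u'N -hs2.
        by apply: hW2; apply/andP; split; lia.
      exists i2, t2; split; first by split => //; lia.
      by rewrite hpN addSn.
    have [_ opt'] := Hopt j t.+1 j1 ltac:(lia).
    have h1 := le_trans IH1 (opt' u' feas').
    have hQ : (Qctg S zc vc theta l j (t.+1 + N_ S) (pred_z S theta j t.+1 (zc j t.+1) u' (N_ S))
               <= (Jshift S zc vc theta l i2 (theta j) t2 (t.+1 + N_ S))%:E)%E.
      apply: ereal_inf_lbound; exists i2, t2; split => //; first by split => //; lia.
    have := le_trans h1 (leeD (lexx _) hQ); rewrite -EFinD lee_fin => h2.
    apply: le_trans h2 _.
    have eJ : Jshift S zc vc theta l i2 (theta j) t2 (t + N_ S) =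
        l (t + N_ S)%N (shift_z S zc theta i2 (theta j) t2 (t + N_ S))
          (shift_v S vc theta i2 (theta j) t2 (t + N_ S))
        + Jshift S zc vc theta l i2 (theta j) t2 (t.+1 + N_ S).
      by rewrite /Jshift big_ltn ?addSn //; lia.
    rewrite (@sum_last _ (fun s => l (t.+1 + s)%N (pred_z S theta j t.+1 (zc j t.+1) u' s) (u' (t.+1 + s)%N)) (N_ S) N0) /= eJ addrA lerD2r le_eqVlt; apply/orP; left; apply/eqP.
    congr (_ + _).
      apply: eq_big_nat => s hs.
      rewrite hp'; last by lia.
      by rewrite ?natrAddE addSn -addnS u'E //; lia.
    rewrite hp' // prednK // ?natrAddE addSn -addnS prednK // u'N -hs2 //.
  have [_ opt] := Hopt j t j1 ht.
  rewrite /lmpc_cost (@sum_first _ (fun s => l (t + s)%N (pred_z S theta j t (zc j t) u s) (u (t + s)%N)) (N_ S) N0) /=.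
  rewrite -/B ?natrAddE addn0 /Jcl big_ltn; last by lia.
  rewrite -/(Jcl S zc vc l j t.+1) /u -Hv1 // -/u.
  have h : ((Jcl S zc vc l j t.+1 - B)%:E <=
            Qctg S zc vc theta l j (t + N_ S) (pred_z S theta j t (zc j t) u (N_ S)))%E.
    apply: le_ereal_inf_tmp => y [i2 [t2 [hv2 hs2 ->]]].
    by rewrite lee_fin lerBlDl; apply: key.
  apply: le_trans _ (leeD (lexx _) h).
  by rewrite -EFinD lee_fin -addrA (addrC B) subrK.
have part1 : forall t, (t <= T_ S - N_ S)%N ->
    forall i t', valid_idx S zc vc theta j i t' t ->
      shift_z S zc theta i (theta j) t' t = zc j t ->
      Jcl S zc vc l j t <= Jshift S zc vc theta l i (theta j) t' t.
  move=> t ht i t' hv hz; rewrite -lee_fin.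
  apply: le_trans (main (T_ S - N_ S - t)%N t _) (step1 t i t' ht hv hz); lia.
split => // i hi hW.
apply: (part1 0%N (leq0n _) i 0%N); first by split.
have [hz0 _] := Hinit j; have [hzi _] := Hinit i.
by rewrite /shift_z subnn /= addr0 hz0 hzi.
Qed.
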